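(* Suppose that the level-$\ell$ flux coarse degrees of freedom are the averages over every level-$\ell$ face, $1\le\ell\le L-1$. Then for every $w\in\widetilde W^\ell_B$ the function $(I-P^\ell)E^\ell w$ again satisfies $b\big((I-P^\ell)E^\ell w,q_0\big)=0$ for all $q_0\in Q^\ell_0$.
   Context: Setting. $\Omega\subset\mathbb R^2$ is a bounded polygonal domain, $k$ is a coefficient that is constant, $k_i>0$, on each top-level subdomain (more generally a symmetric uniformly positive definite matrix), and for flux fields $u,v$ and scalar $q$ we set $a(u,v)=\int k^{-1}u\cdot v\,dx$, $b(u,q)=-\int(\nabla\cdot u)\,q\,dx$, where for functions that may be discontinuous across subdomain boundaries the integrals are taken piecewise over the subdomains (and the $a$-norm $\|v\|_a=\sqrt{a(v,v)}$ likewise). Level 0: a triangulation of $\Omega$ into (quadrilateral) elements of size $h=H^0$; $U$ is the lowest-order Raviart–Thomas (RT0) space with zero normal component on $\partial\Omega$ and $Q$ the piecewise constants with zero mean on $\Omega$. For levels $\ell=1,\dots,L-1$ there are nested nonoverlapping decompositions of $\Omega$ into level-$\ell$ substructures $\Omega^\ell_i$, $i=1,\dots,N^\ell$, each a union of level-$(\ell-1)$ substructures (level-0 substructures are the elements), forming a conforming quasi-uniform triangulation with characteristic size $H^\ell$. A level-$\ell$ face is the intersection of the boundaries of two adjacent level-$\ell$ substructures; $\Gamma^\ell$ is the set of level-$\ell$ degrees of freedom shared by two level-$\ell$ substructures. Level-1 degrees of freedom are the RT0 flux degrees of freedom; level-$\ell$ degrees of freedom ($\ell\ge2$) are the level-$(\ell-1)$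 flux coarse degrees of freedom. Pressure spaces: $Q^1=Q$, $Q^\ell=Q^\ell_0\oplus Q^\ell_I$, where $Q^\ell_0$ consists of functions constant on each $\Omega^\ell_i$ with zero mean on $\Omega$, $Q^\ell_I=Q^\ell_1\times\dots\times Q^\ell_{N^\ell}$ with $Q^\ell_i$ the functions of $Q^\ell$ supported in $\Omega^\ell_i$ with zero mean on $\Omega^\ell_i$; $Q^{\ell+1}=Q^\ell_0$. Flux spaces: $U^1=U$; $W^\ell=W^\ell_1\times\dots\times W^\ell_{N^\ell}$, where $W^\ell_i$ is the space of flux functions on $\Omega^\ell_i$ (spanned by level-$\ell$ shape functions) with all degrees of freedom on $\partial\Omega^\ell_i\cap\partial\Omega$ zero; $U^\ell\subset W^\ell$ is the subspace of functions continuous across $\Gamma^\ell$; $U^\ell_I\subset U^\ell$ the functions whose degrees of freedom on $\Gamma^\ell$ vanish. $P^\ell$ maps $w\in W^\ell$ to $(u_I,p_I)\in(U^\ell_I,Q^\ell_I)$ solving $a(u_I,v_I)+b(v_I,p_I)=a(w,v_I)$ for all $v_I\in U^\ell_I$ and $b(u_I,q_I)=b(w,q_I)$ for all $q_I\in Q^\ell_I$; we write $(I-P^\ell)w:=w-u_I$, and $w$ is called Stokes harmonic (on level $\ell$) if $u_I=0$. The flux coarse degrees of freedom on level $\ell$ are averages of level-$\ell$ flux degrees of freedom over faces. $\widetilde W^\ell\subset W^\ell$: functions whose flux coarse degrees of freedom have a common value on each face shared by two adjacent level-$\ell$ substructures and vanish on $\partial\Omega$; $\widetilde W^\ell_\Delta\subset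 W^\ell$: functions all of whose flux coarse degrees of freedom vanish; $\widetilde W^\ell_\Pi\subset\widetilde W^\ell$: Stokes harmonic functions in $\widetilde W^\ell$ (uniquely determined by their coarse degrees of freedom), so $\widetilde W^\ell=\widetilde W^\ell_\Delta\oplus\widetilde W^\ell_\Pi$; $U^{\ell+1}=\widetilde W^\ell_\Pi$. $E^\ell:\widetilde W^\ell\to U^\ell$ is the projection averaging the values of each interface degree of freedom $x\in\partial\Omega^\ell_i\cap\partial\Omega^\ell_j$ with weights $e_i(x)=k_i^{-\gamma}/(k_i^{-\gamma}+k_j^{-\gamma})$ for a fixed $\gamma\ge0$ (weight 1 for interior degrees of freedom). The balanced space is $\widetilde W^\ell_B=\{w\in\widetilde W^\ell:\ b(w,q_0)=0\ \forall q_0\in Q^\ell_0\}$. *)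

(* Defs.v *)
(* Abstract (discrete, degree-of-freedom level) model of one
   level l of the multilevel BDDC setting for the RT0 mixed problem. *)
From HB Require Import structures.
From mathcomp Require Import all_boot all_order all_algebra.
Set Implicit Arguments. Unset Strict Implicit. Unset Printing Implicit Defensive.
Import Order.TTheory GRing.Theory Num.Theory.
Local Open Scope ring_scope.

(* Data of one level l (1 <= l <= L-1):
   S  : level-l substructures Omega^l_i
   X  : level-l flux degrees of freedom (global locations)
   C  : pressure cells carrying the basis of Q^l (level-(l-1) substructures,
        i.e. elements for l = 1); each lies in one substructure [cell_sub]
   F  : level-l faces (intersection of boundaries of two adjacent
        substructures [fs1 f], [fs2 f])
   A flux field w in W^l is given by its local dof values  w i x  (i : S). *)
Record mlevel (R : realFieldType) := MLevel {
  S : finType; X : finType; C : finType; F : finType;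
  own : S -> X -> bool;        (* x is a dof of the closure of Omega_i *)
  onbd : S -> X -> bool;       (* x lies on the boundary of Omega_i *)
  bnd : X -> bool;             (* x lies on the boundary of Omega *)
  sgn : S -> X -> R;           (* +1/-1 : orientation of dof x wrt outward normal of Omega_i *)
  m : X -> R;                  (* flux measure of dof x : flux through x = m x * value *)
  cell_sub : C -> S;
  area : C -> R;
  face_of : X -> option F;
  fs1 : F -> S; fs2 : F -> S;
  (* divint u c = integral over cell c of div u (piecewise, of the local piece) *)
  divint : (S -> X -> R) -> C -> R;
  onbd_own : forall i x, onbd i x -> own i x;
  m_pos : forall x, 0 < m x;
  area_pos : forall c, 0 < area c;
  sgn_pm : forall i x, sgn i x = 1 \/ sgn i x = -1;
  fs_neq : forall f, fs1 f != fs2 f;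
  face_onbd : forall x f, face_of x = Some f -> onbd (fs1 f) x && onbd (fs2 f) x;
  face_own : forall x f i, face_of x = Some f -> own i x -> i = fs1 f \/ i = fs2 f;
  face_nbnd : forall x f, face_of x = Some f -> ~~ bnd x;
  onbd_face : forall i x, onbd i x -> ~~ bnd x -> exists f, face_of x = Some f;
  sgn_face : forall x f, face_of x = Some f -> sgn (fs1 f) x = 1 /\ sgn (fs2 f) x = -1;
  divint_lin : forall (s : R) (u v : S -> X -> R) c,
      divint (fun i x => s * u i x + v i x) c = s * divint u c + divint v c;
  divint_local : forall (u v : S -> X -> R) c,
      (forall x, u (cell_sub c) x = v (cell_sub c) x) -> divint u c = divint v c;
  div_thm : forall (u : S -> X -> R) i,
      \sum_(c | cell_sub c == i) divint u c
      = \sum_(x | onbd i x) sgn i x * m x * u i x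
}.

Section Spaces.
Variables (R : realFieldType) (L : mlevel R).

Definition fluxfun := S L -> X L -> R.
Definition pressfun := C L -> R.

Definition bform (u : fluxfun) (q : pressfun) : R :=
  - \sum_c q c * divint u c.

Definition inW (w : fluxfun) : Prop :=
  forall i x, (~~ own i x -> w i x = 0) /\ (bnd x -> w i x = 0).

Definition inGamma (x : X L) : Prop :=
  exists i j, i <> j /\ onbd i x /\ onbd j x.

Definition inU (w : fluxfun) : Prop :=
  inW w /\ forall i j x, onbd i x -> onbd j x -> w i x = w j x.

Definition inUI (w : fluxfun) : Prop :=
  inU w /\ forall i x, inGamma x -> w i x = 0.

Definition inQ (q : pressfun) : Prop := \sum_c area c * q c = 0.

Definition inQ0 (q : pressfun) : Prop :=
  inQ q /\ exists g : S L -> R, forall c, q c = g (cell_sub c).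

Definition inQI (q : pressfun) : Prop :=
  forall i, \sum_(c | cell_sub c == i) area c * q c = 0.

(* flux coarse dof: (flux-weighted) average over face f of the piece of w on Omega_i *)
Definition favg (w : fluxfun) (i : S L) (f : F L) : R :=
  (\sum_(x | face_of x == Some f) m x * w i x) / (\sum_(x | face_of x == Some f) m x).

Definition inWt (w : fluxfun) : Prop :=
  inW w /\ forall f, favg w (fs1 f) f = favg w (fs2 f) f.

Definition inWB (w : fluxfun) : Prop :=
  inWt w /\ forall q0, inQ0 q0 -> bform w q0 = 0.

(* E^l with weights e_i = rho_i / (rho_i + rho_j), rho_i standing for k_i^{-gamma} *)
Definition Eop (rho : S L -> R) (w : fluxfun) : fluxfun :=
  fun i x =>
    if own i x then
      match face_of x with
      | Some f => (rho (fs1 f) * w (fs1 f) x + rho (fs2 f) * w (fs2 f) x)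
                  / (rho (fs1 f) + rho (fs2 f))
      | None => w i x
      end
    else 0.

End Spaces.

(* Main.v *)
Require Import Defs.
From HB Require Import structures.
From mathcomp Require Import all_boot all_order all_algebra.
From mathcomp Require Import ring.
Import Order.TTheory GRing.Theory Num.Theory.
Local Open Scope ring_scope.

Section Aux.
Variables (R : realFieldType) (L : mlevel R).

Definition Tsum (g : S L -> R) (u : fluxfun L) : R :=
  \sum_x \sum_(i | onbd i x) g i * (sgn i x * m x * u i x).

Lemma bform_T (u : fluxfun L) (q : pressfun L) g :
  (forall c, q c = g (cell_sub c)) -> bform u q = - Tsum g u.
Proof.
move=> Hq; rewrite /bform /Tsum; congr (- _).
rewrite (partition_big (@cell_sub _ L) predT) //=.
under eq_bigr => i _.
  rewrite (eq_bigl (fun c => cell_sub c == i)) //.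
  under eq_bigr => c /eqP Hc do rewrite Hq Hc.
  rewrite -big_distrr /= div_thm big_distrr /=.
over.
rewrite /=.
rewrite (eq_bigr (fun i => \sum_x if onbd i x then g i * (sgn i x * m x * u i x) else 0)); last first.
  by move=> i _; rewrite big_mkcond.
rewrite exchange_big; apply eq_bigr => x _.
by rewrite [RHS]big_mkcond.
Qed.


Lemma face_sum (x : X L) (f : F L) (g : S L -> R) (u : fluxfun L) :
  face_of x = Some f ->
  \sum_(i | onbd i x) g i * (sgn i x * m x * u i x)
  = g (fs1 f) * (m x * u (fs1 f) x) - g (fs2 f) * (m x * u (fs2 f) x).
Proof.
move=> Hf.
have /andP [H1 H2] := face_onbd Hf.
have [s1 s2] := sgn_face Hf.
have Hne := fs_neq f.
rewrite (bigD1 (fs1 f)) //= (bigD1 (fs2 f)) /=; last by rewrite H2 eq_sym Hne.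
rewrite big1 ?addr0.
  by rewrite s1 s2; ring.
move=> i /andP [/andP [Hi n1] n2].
have [e|e] := face_own Hf (onbd_own Hi).
  by rewrite e eqxx in n1.
by rewrite e eqxx in n2.
Qed.

Lemma Asum_eq (w : fluxfun L) (f : F L) :
  favg w (fs1 f) f = favg w (fs2 f) f ->
  \sum_(x | face_of x == Some f) m x * w (fs1 f) x =
  \sum_(x | face_of x == Some f) m x * w (fs2 f) x.
Proof.
rewrite /favg.
have [D0|Dn0] := eqVneq (\sum_(x | face_of x == Some f) m x) 0.
  have H := psumr_eq0P (fun x _ => ltW (m_pos x)) D0.
  move=> _; rewrite !big1 // => x /H ->; by rewrite mul0r.
move=> E; apply: (mulIf (invr_neq0 Dn0)); exact: E.
Qed.

End Aux.
Arguments Tsum {R L}.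
Arguments bform_T {R L}.
Arguments face_sum {R L}.
Arguments Asum_eq {R L}.

Theorem mainTheorem3 (R : realFieldType) (L : mlevel R) (rho : S L -> R)
    (a : fluxfun L -> fluxfun L -> R) :
  (forall i, 0 < rho i) ->
  forall w : fluxfun L, inWB w ->
  forall (uI : fluxfun L) (pI : pressfun L),
    inUI uI -> inQI pI ->
    (forall vI, inUI vI -> a uI vI + bform vI pI = a (Eop rho w) vI) ->
    (forall qI, inQI qI -> bform uI qI = bform (Eop rho w) qI) ->
  forall q0 : pressfun L, inQ0 q0 ->
    bform (fun i x => Eop rho w i x - uI i x) q0 = 0.
Proof.
move=> rpos w [[HW Hfav] Hbal] uI pI [[HuW _] HuG] _ _ _ q0 Hq0.
have [_ [g Hg]] := Hq0.
have Tw : Tsum g w = 0.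
  by apply/eqP; rewrite -oppr_eq0 -(bform_T w q0 g Hg) Hbal.
have TuI : Tsum g uI = 0.
  apply: big1 => x _; apply: big1 => i Hi.
  have -> : uI i x = 0; last by rewrite !mulr0.
  have [Hb|Hnb] := boolP (bnd x); first by apply (HuW i x).2.
  have [f Hf] := onbd_face Hi Hnb.
  apply: HuG; exists (fs1 f), (fs2 f); split; first exact/eqP/fs_neq.
  by move/andP: (face_onbd Hf).
have TE : Tsum g (Eop rho w) = Tsum g w.
  apply/eqP; rewrite -subr_eq0; apply/eqP.
  rewrite /Tsum -sumrB (partition_big (fun x => face_of x) predT) //=.
  apply: big1 => o _; case: o => [f|].
    under eq_bigr => x /eqP Hx do rewrite !(face_sum x f g _ Hx).
    have HE : forall k x, face_of x == Some f -> (k = fs1 f \/ k = fs2 f) ->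
        Eop rho w k x = (rho (fs1 f) * w (fs1 f) x + rho (fs2 f) * w (fs2 f) x)
                  / (rho (fs1 f) + rho (fs2 f)).
      move=> k x /eqP Hx Hk; rewrite /Eop.
      have /andP [H1 H2] := face_onbd Hx.
      have -> : own k x by case: Hk => ->; apply: onbd_own.
      by rewrite Hx.
    under eq_bigr => x Hx do rewrite (HE (fs1 f) x Hx (or_introl erefl)) (HE (fs2 f) x Hx (or_intror erefl)).
    have HA := Asum_eq w f (Hfav f).
    set A := \sum_(x | _) _ in HA.
    have Hs : rho (fs1 f) + rho (fs2 f) != 0 by rewrite gt_eqF // addr_gt0.
    have key : \sum_(x | face_of x == Some f) m x *
        ((rho (fs1 f) * w (fs1 f) x + rho (fs2 f) * w (fs2 f) x) /
         (rho (fs1 f) + rho (fs2 f))) = A.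
      rewrite (eq_bigr (fun x => (rho (fs1 f) * (m x * w (fs1 f) x) + rho (fs2 f) * (m x * w (fs2 f) x)) / (rho (fs1 f) + rho (fs2 f)))); last first.
        by move=> x _; field.
      rewrite -mulr_suml big_split /= -!mulr_sumr -HA /A.
      by field.
    set v := fun x => (rho (fs1 f) * w (fs1 f) x + rho (fs2 f) * w (fs2 f) x) / (rho (fs1 f) + rho (fs2 f)).
    rewrite (eq_bigr (fun x => g (fs1 f) * (m x * v x - m x * w (fs1 f) x) - g (fs2 f) * (m x * v x - m x * w (fs2 f) x))); last first.
      by move=> x _; rewrite /v; ring.
    rewrite sumrB -!mulr_sumr !sumrB key -HA /A subrr.
    by rewrite mulr0 mulr0 subrr.
  apply: big1 => x /eqP Hx.
  rewrite -sumrB big1 // => i Hi.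
  have Hb : bnd x.
    apply/negPn/negP => Hnb.
    by have [f Hf] := onbd_face Hi Hnb; rewrite Hx in Hf.
  have H0 : w i x = 0 by apply (HW i x).2.
  by rewrite /Eop (onbd_own Hi) Hx H0 !mulr0 subrr.
rewrite (bform_T _ q0 g Hg).
have -> : Tsum g (fun i x => Eop rho w i x - uI i x) = Tsum g (Eop rho w) - Tsum g uI.
  rewrite /Tsum -sumrB; apply eq_bigr => x _; rewrite -sumrB; apply eq_bigr => i _.
  ring.
by rewrite TE Tw TuI subrr oppr0.
Qed.
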